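(* There exists a family $\mathcal{T}\subset\mathcal{L}$ with $|\mathcal{T}|=2^{\mathfrak{c}}$ such that for every $\tau\in\mathcal{T}$ the space $(\mathbb{R},\tau)$ is a completely normal Baire space, and for distinct $\tau,\tau'\in\mathcal{T}$ the spaces $(\mathbb{R},\tau)$ and $(\mathbb{R},\tau')$ are not homeomorphic.
   Context: $\mathfrak{c}=|\mathbb{R}|$. $\eta$ denotes the Euclidean topology on $\mathbb{R}$. $\mathcal{L}$ denotes the family of all Hausdorff topologies $\tau$ on the set $\mathbb{R}$ with $\tau\subset\eta$ (i.e. coarser than the Euclidean topology). *)

(* Defs.v *)
From HB Require Import structures.
From mathcomp Require Import all_boot all_algebra.
From mathcomp Require Import all_classical all_reals all_analysis.
From mathcomp Require Import Rstruct Rstruct_topology.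
From Stdlib Require Import Reals.

Set Implicit Arguments. Unset Strict Implicit. Unset Printing Implicit Defensive.
Local Open Scope classical_set_scope.

Definition is_topology (tau : set (set R)) : Prop :=
  [/\ tau setT, tau set0,
      (forall F : set (set R), F `<=` tau -> tau (\bigcup_(U in F) U)) &
      (forall U V, tau U -> tau V -> tau (U `&` V))].

Definition coarser_than_euclid (tau : set (set R)) : Prop :=
  forall U, tau U -> open (U : set R).

Definition hausdorff_top (tau : set (set R)) : Prop :=
  forall x y : R, x <> y ->
    exists U V, [/\ tau U, tau V, U x, V y & U `&` V = set0].

Definition in_L (tau : set (set R)) : Prop :=
  [/\ is_topology tau, hausdorff_top tau & coarser_than_euclid tau].

Definition tclosed (tau : set (set R)) (F : set R) : Prop := tau (~` F).

(* The subspace S of (R, tau) is normal: disjoint relatively closed subsets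
   of S have disjoint relatively open neighbourhoods in S. *)
Definition normal_subspace (tau : set (set R)) (S : set R) : Prop :=
  forall F1 F2 : set R, tclosed tau F1 -> tclosed tau F2 ->
    S `&` F1 `&` F2 = set0 ->
    exists U V, [/\ tau U, tau V, S `&` F1 `<=` U, S `&` F2 `<=` V &
                    S `&` U `&` V = set0].

(* Completely (= hereditarily) normal: every subspace is normal. *)
Definition completely_normal (tau : set (set R)) : Prop :=
  forall S : set R, normal_subspace tau S.

Definition tdense (tau : set (set R)) (D : set R) : Prop :=
  forall U, tau U -> U !=set0 -> U `&` D !=set0.

Definition baire (tau : set (set R)) : Prop :=
  forall G : nat -> set R, (forall n, tau (G n)) -> (forall n, tdense tau (G n)) ->
    tdense tau (\bigcap_n G n).

Definition homeomorphic (tau tau' : set (set R)) : Prop :=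
  exists (f g : R -> R), [/\ cancel f g, cancel g f,
    (forall V, tau' V -> tau (f @^-1` V)) &
    (forall U, tau U -> tau' (g @^-1` U))].

(* Main.v *)
Require Import Defs.
From mathcomp Require Import all_boot all_algebra.
From mathcomp Require Import all_classical all_reals all_analysis.
From mathcomp Require Import Rstruct Rstruct_topology.
From Stdlib Require Import Reals.
From mathcomp Require Import lra.
Import mathcomp.order.order.Order.TTheory GRing.Theory Num.Theory.
Local Open Scope classical_set_scope.
Local Open Scope ring_scope.
From mathcomp Require Import zify.
Bind Scope ring_scope with R.
Lemma openP (U : set R) :
  open U <-> forall x, U x -> exists2 r : R, 0 < r & forall y, `|x - y| < r -> U y.
Proof.
split.
- move=> oU x Ux.
  move: oU; rewrite openE => /(_ x Ux); rewrite /interior.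
  move/nbhs_ballP => [r r0 H]. exists r; first exact: r0.
  by move=> y xy; apply: H; rewrite /ball /=.
- move=> H; rewrite openE => x Ux; rewrite /interior; apply/nbhs_ballP.
  have [r r0 Hr] := H x Ux; exists r; first exact: r0.
  by move=> y; rewrite /ball /=; exact: Hr.
Qed.
Lemma absltP (a e : R) : `|a| < e <-> (-e < a /\ a < e).
Proof. by rewrite ltr_norml; split => [/andP[]|[-> ->]]. Qed.
Lemma absleP (a e : R) : `|a| <= e <-> (-e <= a /\ a <= e).
Proof. by rewrite ler_norml; split => [/andP[]|[-> ->]]. Qed.
Lemma absgeP (a e : R) : e <= `|a| <-> (e <= a \/ a <= -e).
Proof.
split.
- move=> h; case: (lerP 0 a) => a0.
  + by left; rewrite (ger0_norm a0) in h.
  + by right; rewrite (ltr0_norm a0) in h; lra.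
- case=> h.
  + apply: (le_trans h); exact: ler_norm.
  + have : - a <= `|a| by rewrite -normrN; exact: ler_norm.
    lra.
Qed.
Lemma absgtP (a e : R) : e < `|a| <-> (e < a \/ a < -e).
Proof.
split.
- move=> h; case: (lerP 0 a) => a0.
  + by left; rewrite (ger0_norm a0) in h.
  + by right; rewrite (ltr0_norm a0) in h; lra.
- case=> h.
  + apply: (lt_le_trans h); exact: ler_norm.
  + have : - a <= `|a| by rewrite -normrN; exact: ler_norm.
    lra.
Qed.

Lemma abs_bnd (a : R) : - `|a| <= a /\ a <= `|a|.
Proof. by apply/absleP. Qed.

Lemma ball_sub (c x y e : R) : `|x - y| < e - `|x - c| -> `|y - c| < e.
Proof. move=> /absltP [h1 h2]; apply/absltP; case: (abs_bnd (x - c)) => b1 b2; split; lra. Qed.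

Fixpoint enc (s : seq bool) : nat := if s is b :: t then addn (addn (muln 2 (enc t)) b) 1 else 0.

Lemma enc_inj : injective enc.
Proof.
elim=> [|b s IH] [|b' s'] //=; first by lia.
  by lia.
move=> h.
have hb : b = b' by case: b h; case: b' => /=; lia.
subst b'; congr (_ :: _); apply: IH; lia.
Qed.

Lemma enc_size s : leq (size s) (enc s).
Proof. elim: s => [|b s IH] //=; lia. Qed.

Definition an (n : nat) : R := (n.+1)%:R.
Definition q (n : nat) : R := if @unpickle rat n is Some r then ratr r else 0%:R.

Lemma q_dense (x d : R) : 0 < d -> exists n, `|x - q n| < d.
Proof.
move=> d0.
have := @dense_rat R [set y | `|x - y| < d].
case.
- by exists x; apply/absltP; lra.
- by apply/openP => y /= yx; exists (d - `|x - y|); [lra | move=> z yz; have := ler_distD y x z; lra].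
- move=> y [xy [r _ ry]]; exists (pickle r); rewrite /q pickleK; by rewrite ry.
Qed.

Definition cut (x : R) : nat -> bool := fun n => q n < x.

Lemma cut_lt (x y : R) : x < y -> cut x <> cut y.
Proof.
move=> xy e.
have h0 : 0 < (y - x) / 2 by lra.
pose m := (x + y) / 2; pose d := (y - x) / 2.
have [n hn] := @q_dense m d h0.
rewrite /m /d in hn.
move/absltP : hn => [h1 h2].
have : cut x n = cut y n by rewrite e.
rewrite /cut; have -> : (q n < x) = false.
  by apply/negbTE; rewrite -leNgt; lra.
have -> : (q n < y) = true by apply/idP; lra.
by [].
Qed.

Lemma cut_inj : injective cut.
Proof.
move=> x y e; case: (ltgtP x y) => // h.
- by case: (cut_lt _ _ h).
- by case: (cut_lt _ _ h); rewrite e.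
Qed.
Definition g3 (k : nat) := ((3%:R : R) ^+ k)^-1.
Lemma g3_gt0 k : 0 < g3 k.
Proof. by rewrite /g3 invr_gt0 exprn_gt0. Qed.
Lemma g3S k : g3 k.+1 = g3 k / 3.
Proof. by rewrite /g3 exprSr invfM mulrC. Qed.

Fixpoint ps (b : nat -> bool) (n : nat) :=
  if n is m.+1 then ps b m + (if b m then 2 * g3 m.+1 else 0) else 0.

Lemma ps_mono b n m : ps b n <= ps b (addn n m).
Proof.
elim: m => [|m IH]; first by rewrite addn0.
rewrite addnS /=; have := g3_gt0 (addn n m).+1; case: (b _) => ?; lra.
Qed.

Lemma ps_bound b n m : ps b (addn n m) <= ps b n + g3 n - g3 (addn n m).
Proof.
elim: m => [|m IH]; first by rewrite addn0; lra.
rewrite addnS /= g3S; have := g3_gt0 (addn n m); case: (b _) => ?; lra.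
Qed.

Lemma ps_le1 b n : ps b n <= 1.
Proof.
have := ps_bound b 0 n; rewrite add0n /= /g3 expr0 invr1 => h.
have := g3_gt0 n; rewrite /g3; lra.
Qed.

Definition val (b : nat -> bool) := sup (range (ps b)).

Lemma ps_le_val b n : ps b n <= val b.
Proof.
apply: sup_upper_bound; last by exists n.
split; first by exists (ps b 0), 0%N.
by exists 1 => _ [m _ <-]; exact: ps_le1.
Qed.

Lemma ps_eq b c k : (forall i, leq i.+1 k -> b i = c i) -> ps b k = ps c k.
Proof.
elim: k => [|k IH] h //=.
rewrite IH; last by move=> i ik; apply: h; lia.
by rewrite h.
Qed.

Lemma val_lt b c k : (forall i, leq i.+1 k -> b i = c i) -> b k = true -> c k = false ->
  val c < val b.
Proof.
move=> hbc bk ck.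
have e := @ps_eq b c k hbc.
have h1 : val c <= ps c k + g3 k / 3.
  apply: ge_sup; first by exists (ps c 0), 0%N.
  move=> _ [n _ <-].
  case: (leqP n k) => nk.
  - have := ps_mono c n (subn k n); rewrite subnKC // => h.
    have := g3_gt0 k; lra.
  - have := ps_bound c k.+1 (subn n k.+1); rewrite subnKC // => h.
    move: h; rewrite /= ck g3S => h.
    have := g3_gt0 n; lra.
have h2 := ps_le_val b k.+1.
move: h2; rewrite /= bk g3S => h2.
have := g3_gt0 k; lra.
Qed.

Lemma val_inj : injective val.
Proof.
move=> b c e; apply/funext => n.
apply/eqP; apply/negP => /negP hn.
have ex : exists k, b k != c k by exists n.
case: (ex_minnP ex) => k hk hmin.
have hbc : forall i, leq i.+1 k -> b i = c i.
  move=> i ik; apply/eqP; apply/negP => /negP hi.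
  have := hmin i hi; lia.
move: hk; case bk: (b k); case ck: (c k) => // _.
- by have := @val_lt b c k hbc bk ck; rewrite e ltxx.
- have hcb : forall i, leq i.+1 k -> c i = b i by move=> i /hbc ->.
  by have := @val_lt c b k hcb ck bk; rewrite e ltxx.
Qed.
Definition encN (u : nat -> R) :=
  val (fun n => if @unpickle (nat * nat)%type n is Some (a, m) then cut (u a) m else false).

Lemma encN_inj : injective encN.
Proof.
move=> u v /val_inj e; apply/funext => a; apply: cut_inj; apply/funext => m.
have := congr1 (fun f => f (pickle (a, m))) e; by rewrite /= pickleK.
Qed.

Definition pr (j : nat -> R) (r : R) := encN (fun n => if n is k.+1 then j k else r).

Lemma pr_inj j r j' r' : pr j r = pr j' r' -> j = j' /\ r = r'.
Proof.
move=> /encN_inj e; split.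
- by apply/funext => k; have := congr1 (fun f => f k.+1) e.
- by have := congr1 (fun f => f 0%N) e.
Qed.

Definition psi (u : (nat -> R) -> set R) : set R :=
  [set z | exists j r, u j r /\ z = pr j r].

Lemma psi_inj : injective psi.
Proof.
move=> u v e; apply/funext => j; apply/funext => r; apply/propext.
split => h.
- have : psi v (pr j r) by rewrite -e; exists j, r.
  by case=> j' [r' [h' /pr_inj [-> ->]]].
- have : psi u (pr j r) by rewrite e; exists j, r.
  by case=> j' [r' [h' /pr_inj [-> ->]]].
Qed.
Definition Aset (r : R) : set nat := [set n | exists k, n = enc (mkseq (cut r) k)].

Definition filt (X : set R) : set (set nat) :=
  [set I | exists (L : seq nat) (l : seq R), (forall r, List.In r l -> X r) /\
     (forall n, n \notin L -> (forall r, List.In r l -> ~ Aset r n) -> I n)].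

Definition nb0 (e : R) (I : set nat) : set R :=
  [set x | `|x| < e \/ exists2 n, I n & `|x - an n| < e].

Definition tau (X : set R) : set (set R) :=
  [set U : set R | open U /\ (U 0 -> exists2 e, 0 < e & exists2 I, filt X I & nb0 e I `<=` U)].

Lemma filt_setT X : filt X setT.
Proof. by exists [::], [::]. Qed.

Lemma filt_I X I J : filt X I -> filt X J -> filt X (I `&` J).
Proof.
rewrite /filt /=.
move=> [L1 [l1 [hl hI]]] [L2 [l2 [hl2 hJ]]]; exists (L1 ++ L2), (l1 ++ l2); split.
- by move=> r rl; case: (List.in_app_or _ _ _ rl) => [/hl|/hl2].
- move=> n; rewrite mem_cat negb_or => /andP[nL nL2] hA; split.
  + by apply: hI => // r rl; apply: hA; apply: List.in_or_app; left.
  + by apply: hJ => // r rl; apply: hA; apply: List.in_or_app; right.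
Qed.

Lemma filt_up X I J : I `<=` J -> filt X I -> filt X J.
Proof. rewrite /filt /=; move=> IJ [L [l [hl hI]]]; exists L, l; split => // n h1 h2; exact/IJ/hI. Qed.

Lemma filt_tail X m : filt X [set n | leq m n].
Proof.
exists (iota 0 m), [::]; split => // n; rewrite mem_iota /= => h _.
by move: h; rewrite add0n; case: (leqP m n).
Qed.

Lemma nb0_open e I : open (nb0 e I).
Proof.
apply/openP => x [h|[n In h]].
- exists (e - `|x|); first lra.
  move=> y /absltP xy; left; apply/absltP; have := abs_bnd x; lra.
- exists (e - `|x - an n|); first lra.
  move=> y xy; right; exists n => //; exact: ball_sub xy.
Qed.

Lemma nb0_0 e I : 0 < e -> nb0 e I 0.
Proof. by move=> e0; left; rewrite normr0. Qed.

Lemma tau_open X (U : set R) : tau X U -> open U.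
Proof. by case. Qed.

Lemma tau_good X (U : set R) : open U -> ~ U 0 -> tau X U.
Proof. by move=> oU nU; split => // /nU. Qed.

Lemma tau_top X : is_topology (tau X).
Proof.
split.
- split; first exact: openT.
  by move=> _; exists 1 => //; exists setT => //; exact: filt_setT.
- by split; [exact: open0 | case].
- move=> F FT; split.
  + by apply: bigcup_open => U /FT [].
  + move=> [U FU U0]; have [_ /(_ U0) [e e0 [I fI sub]]] := FT U FU.
    exists e => //; exists I => // x /sub Ux; by exists U.
- move=> U V [oU hU] [oV hV]; split; first exact: openI.
  move=> [/hU [e e0 [I fI sU]] /hV [e' e0' [J fJ sV]]].
  exists (Num.min e e').
    by rewrite lt_min e0 e0'.
  exists (I `&` J); first exact: filt_I.
  move=> x hx; have hm1 : Num.min e e' <= e by rewrite ge_min lexx.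
  have hm2 : Num.min e e' <= e' by rewrite ge_min lexx orbT.
  split.
  + apply: sU; case: hx => [h|[n [In Jn] h]]; [left; lra | right; exists n => //; lra].
  + apply: sV; case: hx => [h|[n [In Jn] h]]; [left; lra | right; exists n => //; lra].
Qed.
Definition bl (c e : R) : set R := [set z | `|c - z| < e].

Lemma bl_open c e : open (bl c e).
Proof.
apply/openP => x; rewrite /bl /= => h; exists (e - `|c - x|); first lra.
move=> y xy; rewrite /bl /= distrC; apply: (@ball_sub c x y e); by rewrite (distrC x c).
Qed.

Lemma bl_tau X c e : e <= `|c| -> tau X (bl c e).
Proof. move=> ec; apply: tau_good; first exact: bl_open. rewrite /bl /= subr0 => h; lra. Qed.

Lemma bl_center c e : 0 < e -> bl c e c.
Proof. by move=> e0; rewrite /bl /= subrr normr0. Qed.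

Lemma haus0 X (y : R) : y != 0 ->
  exists U V, [/\ tau X U, tau X V, U 0, V y & U `&` V = set0].
Proof.
move=> y0.
have ya : 0 < `|y| by rewrite normr_gt0.
pose m := Num.Def.archi_bound `|y|.
have hm : `|y| < m%:R by apply: archi_boundP.
pose e := Num.min (`|y| / 2) (1 / 2).
have e1 : e <= `|y| / 2 by rewrite ge_min lexx.
have e2 : e <= 1 / 2 by rewrite ge_min lexx orbT.
have e0 : 0 < e by rewrite lt_min; apply/andP; split; lra.
clearbody e m.
exists (nb0 e [set n | leq m n]), (bl y e); split.
- split; first exact: nb0_open.
  by move=> _; exists e => //; exists [set n | leq m n] => //; exact: filt_tail.
- apply: bl_tau; lra.
- exact: nb0_0.
- exact: bl_center.
- apply/seteqP; split => // z [[h|[n mn h]] hb]; rewrite /bl /= in hb; exfalso.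
  + have := ler_distD z y 0; rewrite !subr0; lra.
  + have : (m%:R : R) <= n%:R by rewrite ler_nat.
    move: h; rewrite /an => /absltP [h1 h2].
    move: hb => /absltP [h3 h4].
    rewrite -natr1 in h1 h2 => hmn.
    case: (abs_bnd y) => b1 b2; lra.
Qed.

Lemma pos_min2 (a b : R) : 0 < a -> 0 < b -> exists e, [/\ 0 < e, e <= a & e <= b].
Proof. move=> a0 b0; case: (lerP a b) => h; [exists a | exists b]; split => //; lra. Qed.

Lemma pos_min3 (a b c : R) : 0 < a -> 0 < b -> 0 < c ->
  exists e, [/\ 0 < e, e <= a, e <= b & e <= c].
Proof.
move=> a0 b0 c0; have [d [d0 da db]] := @pos_min2 a b a0 b0.
have [e [e0 ed ec]] := @pos_min2 d c d0 c0; exists e; split => //; lra.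
Qed.

Lemma hausxy X (x y : R) : x != 0 -> y != 0 -> x != y ->
  exists U V, [/\ tau X U, tau X V, U x, V y & U `&` V = set0].
Proof.
move=> x0 y0 xy.
have xa : 0 < `|x| / 2 by rewrite divr_gt0 // normr_gt0.
have ya : 0 < `|y| / 2 by rewrite divr_gt0 // normr_gt0.
have xya : 0 < `|x - y| / 2 by rewrite divr_gt0 // normr_gt0 subr_eq0.
have [e [e0 ex ey exy]] := pos_min3 _ _ _ xa ya xya.
exists (bl x e), (bl y e); split.
- apply: bl_tau; have := normr_ge0 x; lra.
- apply: bl_tau; have := normr_ge0 y; lra.
- exact: bl_center.
- exact: bl_center.
- apply/seteqP; split => // z [h1 h2]; rewrite /bl /= in h1 h2; exfalso.
  have := ler_distD z x y; rewrite (distrC z y); lra.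
Qed.

Lemma tau_haus X : hausdorff_top (tau X).
Proof.
move=> x y xy.
case: (eqVneq x 0) => [ex|x0].
  have y0 : y != 0 by apply/eqP => ey; apply: xy; rewrite ex ey.
  by rewrite ex; apply: haus0.
case: (eqVneq y 0) => [ey|y0].
  have [U [V [hU hV U0 Vx UV]]] := @haus0 X x x0.
  by exists V, U; split => //; [rewrite ey | rewrite setIC].
by apply: hausxy => //; apply/eqP.
Qed.

Lemma tau_L X : in_L (tau X).
Proof. split; [exact: tau_top | exact: tau_haus | move=> U; exact: tau_open]. Qed.
Lemma open_nz : open [set z : R | z != 0].
Proof.
apply/openP => z /= z0; exists `|z|; first by rewrite normr_gt0.
move=> y zy; apply/eqP => y0; move: zy; rewrite y0 subr0 ltxx.
by [].
Qed.

Lemma tau_dense X (D : set R) : tdense (tau X) D -> dense D.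
Proof.
move=> hD O [x Ox] oO.
have [r r0 hr] := (openP O).1 oO x Ox.
have [x' [Ox' x'0]] : exists x', O x' /\ x' != 0.
  case: (eqVneq x 0) => [ex|x0]; last by exists x.
  exists (r / 2); split.
  - apply: hr; rewrite ex sub0r normrN; apply/absltP; split; lra.
  - by apply/eqP => h; lra.
have := hD (O `&` [set z | z != 0]).
case.
- apply: tau_good; first exact: openI oO open_nz.
  by case=> _ /=; rewrite eqxx.
- by exists x'.
- by move=> z [[Oz _] Dz]; exists z.
Qed.

Lemma tau_baire X : baire (tau X).
Proof.
move=> G oG dG.
have hB := @Baire R R^o G.
have hd : dense (\bigcap_i G i).
  apply: hB => i; split; [exact: tau_open (oG i) | exact (@tau_dense X (G i) (dG i))].
move=> U tU U0; exact (hd U U0 (@tau_open X U tU)).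
Qed.
Lemma dist_tri (x y c : R) : `|x - c| <= `|x - y| + `|y - c|.
Proof. exact: ler_distD. Qed.

Lemma tauU X U V : tau X U -> tau X V -> tau X (U `|` V).
Proof.
move=> [oU hU] [oV hV]; split; first exact: openU.
case=> [/hU|/hV] [e e0 [I fI s]]; exists e => //; exists I => // x /s; by [left|right].
Qed.

Lemma tau_reg X W : tau X W -> W 0 -> exists W1, [/\ tau X W1, W1 0 &
  forall y, ~ W y -> exists2 r, 0 < r & forall z, `|z - y| < r -> ~ W1 z].
Proof.
move=> [oW hW] W0; have [e e0 [I fI sW]] := hW W0.
have e20 : 0 < e / 2 by lra.
exists (nb0 (e / 2) I); split.
- split; first exact: nb0_open.
  by move=> _; exists (e / 2) => //; exists I.
- exact: nb0_0.
- move=> y Wy; exists (e / 2) => // z zy hz; apply: Wy; apply: sW.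
  case: hz => [h|[n In h]].
  + left; have := dist_tri y z 0; rewrite !subr0 (distrC y z); lra.
  + right; exists n => //; have := dist_tri y z (an n); rewrite (distrC y z); lra.
Qed.

Definition N (P Q : set R) : set R := [set x | exists a r, [/\ P a, 0 < r,
  (forall y, `|y - a| < r -> ~ Q y /\ y != 0) & `|x - a| < r / 2]].

Lemma N_open P Q : open (N P Q).
Proof.
apply/openP => x [a [r [Pa r0 hr xa]]]; exists (r / 2 - `|x - a|); first lra.
move=> y xy; exists a, r; split => //; exact: (@ball_sub a x y).
Qed.

Lemma N_0 P Q : ~ N P Q 0.
Proof.
move=> [a [r [Pa r0 hr xa]]].
have h : `|0 - a| < r by lra.
by case: (hr 0 h) => _; rewrite eqxx.
Qed.

Lemma N_tau X P Q : tau X (N P Q).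
Proof. apply: tau_good; [exact: N_open | exact: N_0]. Qed.

Lemma N_disj P Q : N P Q `&` N Q P = set0.
Proof.
apply/seteqP; split => // x [[a [r [Pa r0 hr xa]]] [b [s [Qb s0 hs xb]]]]; exfalso.
have := dist_tri b x a; rewrite (distrC b x) => hab.
case: (lerP s r) => h.
- have hb : `|b - a| < r by lra.
  by case: (hr b hb) => /(_ Qb).
- have := dist_tri a x b; rewrite (distrC a x) => hba.
  have ha : `|a - b| < s by lra.
  by case: (hs a ha) => /(_ Pa).
Qed.

Lemma N_anti P Q Q' : Q `<=` Q' -> N P Q' `<=` N P Q.
Proof.
move=> QQ x [a [r [Pa r0 hr xa]]]; exists a, r; split => // y /hr [h1 h2]; split => //.
by move=> /QQ.
Qed.

Lemma N_cover P Q a : P a -> a != 0 ->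
  (exists2 r, 0 < r & forall y, `|y - a| < r -> ~ Q y) -> N P Q a.
Proof.
move=> Pa a0 [r r0 hr].
have a0' : 0 < `|a| by rewrite normr_gt0.
have [e [e0 er ea]] := @pos_min2 r `|a| r0 a0'.
exists a, e; split => //.
- move=> y ya; split; first by apply: hr; lra.
  apply/eqP => y0; move: ya; rewrite y0 sub0r normrN; lra.
- by rewrite subrr normr0; lra.
Qed.

Lemma hn_core X (A B W1 : set R) :
  tau X W1 -> (A 0 -> W1 0) -> ~ B 0 ->
  (forall a, A a -> a != 0 -> exists2 r, 0 < r & forall y, `|y - a| < r -> ~ B y) ->
  (forall b, B b -> exists2 r, 0 < r & forall y, `|y - b| < r -> ~ A y /\ ~ W1 y) ->
  exists U V, [/\ tau X U, tau X V, A `<=` U, B `<=` V & U `&` V = set0].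
Proof.
move=> tW AW nB hA hB.
exists (N A B `|` W1), (N B (A `|` W1)); split.
- apply: tauU => //; exact: N_tau.
- exact: N_tau.
- move=> a Aa; case: (eqVneq a 0) => [a0|a0].
  + by right; rewrite a0; apply: AW; rewrite -a0.
  + by left; apply: N_cover => //; exact: hA.
- move=> b Bb; apply: N_cover => //.
  + by apply/eqP => b0; apply: nB; rewrite -b0.
  + have [r r0 hr] := hB b Bb; exists r => // y /hr [h1 h2]; by case.
- apply/seteqP; split => // x [[h|h] hv]; exfalso.
  + have : (N A B `&` N B A) x.
      by split => //; apply: (@N_anti B A (A `|` W1)) => //; move=> z; left.
    by rewrite N_disj.
  + case: hv => [b [r [Bb r0 hr xb]]].
    have hx : `|x - b| < r by lra.
    by case: (hr x hx) => /(_ (or_intror h)).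
Qed.
Lemma hn_half X (S F1 F2 : set R) : tclosed (tau X) F1 -> tclosed (tau X) F2 ->
  S `&` F1 `&` F2 = set0 -> ~ (S `&` F2) 0 ->
  exists U V, [/\ tau X U, tau X V, S `&` F1 `<=` U, S `&` F2 `<=` V & U `&` V = set0].
Proof.
move=> c1 c2 hS nB.
have disj : forall x, S x -> F1 x -> F2 x -> False.
  by move=> x Sx F1x F2x; have : (S `&` F1 `&` F2) x by []; rewrite hS.
have [W1 [tW AW hW]] : exists W1, [/\ tau X W1, (S `&` F1) 0 -> W1 0 &
    forall y, F2 y -> exists2 r, 0 < r & forall z, `|z - y| < r -> ~ W1 z].
  case: (pselect ((S `&` F1) 0)) => h.
  - have W0 : (~` F2) 0 by case: h => S0 F10 F20; exact: (disj 0).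
    have [W1 [tW1 W10 hW1]] := @tau_reg X (~` F2) c2 W0.
    exists W1; split => // y F2y; apply: hW1; by [].
  - exists set0; split.
    + apply: (@tau_good X set0); [exact: open0 | by []].
    + by move/h.
    + by move=> y _; exists 1; [exact: ltr01 | move=> z _ ?].
apply: (@hn_core X _ _ W1 tW AW nB).
- move=> a [Sa F1a] a0.
  have nF2a : (~` F2) a by move=> F2a; exact: (disj a).
  have [r r0 hr] := (openP _).1 (@tau_open X _ c2) a nF2a.
  exists r => // y ya [_ F2y]; apply: (hr y) => //; by rewrite distrC.
- move=> b [Sb F2b].
  have nF1b : (~` F1) b by move=> F1b; exact: (disj b).
  have [r1 r10 hr1] := (openP _).1 (@tau_open X _ c1) b nF1b.
  have [r2 r20 hr2] := hW b F2b.
  have [e [e0 e1 e2]] := @pos_min2 r1 r2 r10 r20.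
  exists e => // y yb; split.
  + move=> [_ F1y]; apply: (hr1 y) => //; rewrite distrC; lra.
  + apply: hr2; lra.
Qed.

Lemma tau_cn X : completely_normal (tau X).
Proof.
move=> S F1 F2 c1 c2 hS.
have fin : forall U V, U `&` V = set0 -> S `&` U `&` V = set0.
  move=> U V UV; apply/seteqP; split => // x [[_ Ux] Vx].
  by have : (U `&` V) x by []; rewrite UV.
case: (pselect ((S `&` F2) 0)) => h.
- have nA : ~ (S `&` F1) 0.
    move=> [S0 F10]; case: h => _ F20.
    by have : (S `&` F1 `&` F2) 0 by []; rewrite hS.
  have hS' : S `&` F2 `&` F1 = set0 by rewrite -setIA (setIC F2) setIA.
  have [U [V [tU tV AU BV UV]]] := @hn_half X S F2 F1 c2 c1 hS' nA.
  exists V, U; split => //; apply: fin; by rewrite setIC.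
- have [U [V [tU tV AU BV UV]]] := @hn_half X S F1 F2 c1 c2 hS h.
  by exists U, V; split => //; apply: fin.
Qed.
Lemma bound_L (L : seq nat) : exists K, forall x, x \in L -> leq x.+1 K.
Proof.
elim: L => [|x L [K hK]]; first by exists 0%N.
exists (maxn x.+1 K) => y; rewrite in_cons => /orP[/eqP ->|/hK]; lia.
Qed.

Lemma bound_l (t : R) (l : seq R) : (forall s, List.In s l -> s <> t) ->
  exists K, forall s, List.In s l -> exists j, leq j.+1 K /\ cut s j != cut t j.
Proof.
elim: l => [|s l IH] h; first by exists 0%N.
have [K hK] : exists K, forall s', List.In s' l -> exists j, leq j.+1 K /\ cut s' j != cut t j.
  by apply: IH => s' hs; apply: h; right.
have [j hj] : exists j, cut s j != cut t j.
  apply: contrapT => hall; apply: (h s); first by left.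
  apply: cut_inj; apply/funext => j; apply/eqP; apply: contrapT => /negP hj.
  by apply: hall; exists j.
exists (maxn j.+1 K) => s' [<-|/hK [j' [j'K hj']]].
- by exists j; split => //; lia.
- by exists j'; split => //; lia.
Qed.

Lemma not_filt (Y : set R) t : ~ Y t -> ~ filt Y [set n | ~ Aset t n].
Proof.
move=> nYt [L [l [hl hI]]].
have [K1 hK1] := bound_L L.
have [K2 hK2] : exists K, forall s, List.In s l -> exists j, leq j.+1 K /\ cut s j != cut t j.
  by apply: bound_l => s /hl Ys st; apply: nYt; rewrite -st.
pose K := maxn K1 K2.
pose n := enc (mkseq (cut t) K).
have nK : leq K n by have := enc_size (mkseq (cut t) K); rewrite size_mkseq.
apply: (hI n).
- apply/negP => /hK1; lia.
- move=> s ls [k hk].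
  have [j [jK hj]] := hK2 s ls.
  have e := @enc_inj _ _ hk.
  have sz : K = k by have := congr1 size e; rewrite !size_mkseq.
  subst k.
  have := congr1 (fun w => nth false w j) e.
  rewrite !nth_mkseq; [|lia|lia] => ej.
  by move: hj; rewrite ej eqxx.
- by exists K.
Qed.

Lemma an_ge1 n : 1 <= an n.
Proof. by rewrite /an ler1n. Qed.

Lemma an_sep n m : n <> m -> 1 <= `|an n - an m|.
Proof.
move=> nm; apply/absgeP; rewrite /an.
case: (ltngtP n m) => h.
- right; have : (n.+2)%:R <= (m.+1)%:R :> R by rewrite ler_nat.
  rewrite -[(n.+2)%:R]natr1; lra.
- left; have : (m.+2)%:R <= (n.+1)%:R :> R by rewrite ler_nat.
  rewrite -[(m.+2)%:R]natr1; lra.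
- by case: nm.
Qed.

Lemma tau_sub X Y t : tau X = tau Y -> X t -> Y t.
Proof.
move=> e Xt; apply: contrapT => nYt.
pose I0 := [set n | ~ Aset t n].
have fX : filt X I0 by exists [::], [:: t]; split; [move=> r [<-|[]] | move=> n _ /(_ t (or_introl erefl))].
pose U := nb0 (1 / 4) I0.
have tU : tau X U.
  split; first exact: nb0_open.
  by move=> _; exists (1 / 4); [lra | exists I0].
have U0 : U 0 by apply: nb0_0; lra.
rewrite e in tU; case: tU => _ /(_ U0) [e' e0 [J fJ sJ]].
apply: (@not_filt Y t nYt); apply: (@filt_up Y J) => // n Jn.
have : U (an n) by apply: sJ; right; exists n => //; rewrite subrr normr0.
case=> [h|[m I0m h]].
- by have := an_ge1 n; move: h => /absltP [h1 h2]; lra.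
- case: (eqVneq n m) => [->//|nm].
  by have := @an_sep n m (elimN eqP nm); lra.
Qed.

Lemma tau_inj : injective tau.
Proof.
move=> X Y e; apply/funext => t; apply/propext; split; first exact: tau_sub.
by apply: tau_sub; rewrite e.
Qed.
Definition hprops (t t' : set (set R)) (f g : R -> R) :=
  [/\ cancel f g, cancel g f,
    (forall V, t' V -> t (f @^-1` V)) & (forall U, t U -> t' (g @^-1` U))].

Lemma homeo_tau t t' f g : hprops t t' f g -> t' = [set V | t (f @^-1` V)].
Proof.
move=> [fg gf hf hg]; apply/funext => V; apply/propext; split; first exact: hf.
move=> /= /hg; have -> // : g @^-1` (f @^-1` V) = V.
by apply/funext => x /=; rewrite gf.
Qed.

Definition code (f g : R -> R) : nat -> R := fun n => if n is k.+1 then f (q k) else g 0.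

Lemma cont_at t Y f g x : (forall U, t U -> open U) -> hprops t (tau Y) f g -> f x != 0 ->
  forall eps, 0 < eps -> exists2 d, 0 < d & forall y, `|x - y| < d -> `|f x - f y| < eps.
Proof.
move=> ht [fg gf hf hg] fx0 eps eps0.
have fxa : 0 < `|f x| by rewrite normr_gt0.
have [e [e0 e1 e2]] := @pos_min2 eps `|f x| eps0 fxa.
have tV : tau Y (bl (f x) e) by apply: bl_tau.
have oV := ht _ (hf _ tV).
have [d d0 hd] := (openP _).1 oV x (@bl_center (f x) e e0).
exists d => // y xy; have := hd y xy; rewrite /bl /= => h; lra.
Qed.

Lemma code_eq t1 t2 Y1 Y2 f1 g1 f2 g2 : t1 = t2 -> (forall U, t1 U -> open U) ->
  hprops t1 (tau Y1) f1 g1 -> hprops t2 (tau Y2) f2 g2 -> code f1 g1 = code f2 g2 ->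
  Y1 = Y2.
Proof.
move=> e12 ho h1 h2 ec; subst t2.
have ff : f1 = f2.
  apply/funext => x.
  have g0 : g1 0 = g2 0 by have := congr1 (fun c => c 0%N) ec.
  have fq : forall k, f1 (q k) = f2 (q k) by move=> k; have := congr1 (fun c => c k.+1) ec.
  case: (h1) => [fg1 gf1 _ _]; case: (h2) => [fg2 gf2 _ _].
  case: (eqVneq x (g1 0)) => [->|xg].
    by rewrite gf1 g0 gf2.
  have n1 : f1 x != 0 by apply/eqP => h; move: xg; rewrite -h fg1 eqxx.
  have n2 : f2 x != 0 by apply/eqP => h; move: xg; rewrite g0 -h fg2 eqxx.
  apply: contrapT => /eqP ne.
  have ep : 0 < `|f1 x - f2 x| / 2 by rewrite divr_gt0 // normr_gt0 subr_eq0.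
  have [d1 d10 hd1] := @cont_at t1 Y1 f1 g1 x ho h1 n1 _ ep.
  have [d2 d20 hd2] := @cont_at t1 Y2 f2 g2 x ho h2 n2 _ ep.
  have [d [d0 dd1 dd2]] := @pos_min2 d1 d2 d10 d20.
  have [k hk] := @q_dense x d d0.
  have := hd1 (q k) ltac:(lra); have := hd2 (q k) ltac:(lra).
  rewrite fq => a1 a2.
  have := dist_tri (f1 x) (f2 (q k)) (f2 x); rewrite (distrC (f2 (q k)) (f2 x)); lra.
apply: tau_inj; rewrite (@homeo_tau _ _ _ _ h1) (@homeo_tau _ _ _ _ h2) ff //.
Qed.
Lemma hom_sym t t' : homeomorphic t t' -> homeomorphic t' t.
Proof. by move=> [f [g [fg gf hf hg]]]; exists g, f; split. Qed.

Arguments hom_sym {t t'}.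

Lemma hom_refl t : homeomorphic t t.
Proof. by exists id, id; split. Qed.

Lemma hom_trans t1 t2 t3 : homeomorphic t1 t2 -> homeomorphic t2 t3 -> homeomorphic t1 t3.
Proof.
move=> [f1 [g1 [fg1 gf1 hf1 hg1]]] [f2 [g2 [fg2 gf2 hf2 hg2]]].
exists (f2 \o f1), (g1 \o g2); split.
- by move=> x /=; rewrite fg2 fg1.
- by move=> x /=; rewrite gf1 gf2.
- by move=> V /hf2 /hf1.
- by move=> U /hg1 /hg2.
Qed.

Arguments hom_trans {t1 t2 t3}.

Lemma hprops_of t t' : homeomorphic t t' -> exists f g, hprops t t' f g.
Proof. by []. Qed.

Definition cls (s : set (set R)) : set (set (set R)) :=
  [set t | (exists Y, t = tau Y) /\ homeomorphic s t].

Definition rep (X : set R) : set (set R) := get (cls (tau X)).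

Lemma rep_cls X : cls (tau X) (rep X).
Proof. apply: getPex; exists (tau X); split; [by exists X | exact: hom_refl]. Qed.

Lemma cls_eq s s' : homeomorphic s s' -> cls s = cls s'.
Proof.
move=> h; apply/funext => t; apply/propext; split => -[hY ht]; split => //.
- exact: hom_trans (hom_sym h) ht.
- exact: hom_trans h ht.
Qed.

Lemma rep_tau X : exists Y, rep X = tau Y.
Proof. by case: (rep_cls X). Qed.

Lemma rep_hom X : homeomorphic (rep X) (tau X).
Proof. by case: (rep_cls X) => _ /hom_sym. Qed.

Lemma rep_eq X X' : homeomorphic (rep X) (rep X') -> rep X = rep X'.
Proof.
move=> h.
have h' : homeomorphic (tau X) (tau X').
  exact: hom_trans (hom_sym (rep_hom X)) (hom_trans h (rep_hom X')).
by rewrite /rep (@cls_eq _ _ h').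
Qed.

Lemma konig (K J : Type) (ps : (J -> set R) -> set R) (e1 : set R -> K) (e2 : set R -> J) :
  injective ps -> (forall X Y, e1 X = e1 Y -> e2 X = e2 Y -> X = Y) ->
  exists h : set R -> set R, injective (e1 \o h).
Proof.
move=> psinj einj.
case: (pselect (exists j, forall x : set R, exists u, u j = x /\ e2 (ps u) = j)) => [[j hj]|nj].
- pose u x := projT1 (cid (hj x)).
  have hu : forall x, u x j = x /\ e2 (ps (u x)) = j := fun x => projT2 (cid (hj x)).
  exists (fun x => ps (u x)) => x y /= exy.
  have e2e : e2 (ps (u x)) = e2 (ps (u y)) by rewrite (hu x).2 (hu y).2.
  have := einj _ _ exy e2e; move/psinj => eu.
  by rewrite -(hu x).1 -(hu y).1 eu.
- exfalso.
  have hn : forall j, exists x, forall u, u j = x -> e2 (ps u) <> j.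
    move=> j; apply: contrapT => H; apply: nj; exists j => x; apply: contrapT => H2.
    apply: H; exists x => u ux e; apply: H2; by exists u.
  pose y j := projT1 (cid (hn j)).
  have hy : forall j u, u j = y j -> e2 (ps u) <> j := fun j => projT2 (cid (hn j)).
  exact: (hy (e2 (ps y)) y erefl erefl).
Qed.
Definition hf X : R -> R := projT1 (cid (rep_hom X)).
Definition hg X : R -> R := projT1 (cid (projT2 (cid (rep_hom X)))).
Lemma hfg X : hprops (rep X) (tau X) (hf X) (hg X).
Proof. exact: (projT2 (cid (projT2 (cid (rep_hom X))))). Qed.

Lemma rep_open X U : rep X U -> open U.
Proof. by have [Y ->] := rep_tau X; exact: tau_open. Qed.

Lemma rep_einj X Y : rep X = rep Y -> code (hf X) (hg X) = code (hf Y) (hg Y) -> X = Y.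
Proof. move=> e ec; exact: (@code_eq (rep X) (rep Y) X Y (hf X) (hg X) (hf Y) (hg Y) e (@rep_open X) (hfg X) (hfg Y) ec). Qed.

Local Open Scope card_scope.

Theorem theorem1 :
  exists T : set (set (set R)),
    [/\ T `<=` in_L,
        (T #= [set: set R])%card,
        (forall tau, T tau -> completely_normal tau /\ baire tau) &
        (forall tau tau', T tau -> T tau' -> tau <> tau' -> ~ homeomorphic tau tau')].
Proof.
exists [set t | exists X, t = rep X]; split.
- by move=> t [X ->]; have [Y ->] := rep_tau X; exact: tau_L.
- apply: Cantor_Bernstein.
  + apply/pcard_injP; exists (fun t => get [set Y | t = tau Y]).
    have key : forall t, (exists X, t = rep X) -> t = tau (get [set Y | t = tau Y]).
      move=> t [X ->]; exact: (@getPex _ [set Y | rep X = tau Y] (rep_tau X)).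
    move=> t t'; rewrite !in_setE => ht ht' e.
    by rewrite (key _ ht) (key _ ht') e.
  + have [h hinj] := @konig _ _ psi rep (fun X => code (hf X) (hg X)) psi_inj rep_einj.
    apply: (@card_le_trans _ _ _ [set (rep \o h) x | x in [set: set R]]).
    * have := @inj_card_eq _ _ [set: set R] (rep \o h) (fun x y _ _ => hinj x y).
      by move/card_esym/card_eqPle => [].
    * by apply: subset_card_le => _ [x _ <-]; exists (h x).
- by move=> t [X ->]; have [Y ->] := rep_tau X; split; [exact: tau_cn | exact: tau_baire].
- move=> t t' [X ->] [X' ->] ne h; apply: ne; exact: rep_eq h.
Qed.
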